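(* Let $H,K$ be finite dimensional complex Hilbert spaces and let $\phi:\mathcal B(K)\to\mathcal B(H)$ be an arbitrary UCP map. Let $\mathcal S_\phi$ be the set of all states $\rho$ of $\mathcal B(K\otimes H)$ of the form $\rho(a\otimes b)=\langle(\phi(a)\otimes b)\xi,\xi\rangle$ ($a\in\mathcal B(K)$, $b\in\mathcal B(H)$), where $\xi$ ranges over the marginally cyclic unit vectors in $H\otimes H$. If $\mathcal S_\phi$ contains a single entangled state, then every state of $\mathcal S_\phi$ is entangled and $\phi$ preserves entanglement. Otherwise, $\phi$ is entanglement breaking.
   Context: A state of $\mathcal B(K\otimes H)$ is separable if it is a convex combination of product states $a\otimes b\mapsto\sigma(a)\tau(b)$ with $\sigma,\tau$ states of $\mathcal B(K)$, $\mathcal B(H)$; otherwise it is entangled. A unit vector $\xi\in H\otimes H$ is marginally cyclic if $(\mathcal B(H)\otimes\mathbf 1)\xi=H\otimes H$, equivalently if $(\mathbf 1\otimes b)\xi=0$ implies $b=0$ for $b\in\mathcal B(H)$. A UCP map $\phi:\mathcal B(K)\to\mathcal B(H)$ preserves entanglement if for every marginally cyclic unit vector $\xi\in H\otimes H$ the state $a\otimes b\mapsto\langle(\phi(a)\otimes b)\xi,\xi\rangle$ of $\mathcal B(K\otimes H)$ is entangled. $\phi$ is entanglement breaking if for every state $\rho$ of $\mathcal B(H\otimes H)$ the state $\rho\circ(\phi\otimes\mathrm{id}_{\mathcal B(H)})$ of $\mathcal B(K\otimes H)$ is separable, where $\phi\otimes\mathrm{id}$ is the UCP map sending $a\otimes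 b$ to $\phi(a)\otimes b$. *)

(* Defs.v *)
(* Finite-dimensional Hilbert spaces are C^n with C = R[i],
   R : realType (any realType is isomorphic to the reals). *)
From HB Require Import structures.
From mathcomp Require Import all_boot all_order all_algebra.
From mathcomp Require Import reals.
From mathcomp.real_closed Require Import complex mxtens.
Set Implicit Arguments. Unset Strict Implicit. Unset Printing Implicit Defensive.
Import Order.TTheory GRing.Theory Num.Theory.
Local Open Scope ring_scope.

Section Defs.
Variable R : realType.
Local Notation C := R[i].

Definition adj {p q : nat} (A : 'M[C]_(p, q)) : 'M[C]_(q, p) :=
  (map_mx Num.conj A)^T.

(* <x, y> := y^* x, linear in the first variable *)
Definition inner {N : nat} (x y : 'cV[C]_N) : C := (adj y *m x) 0 0.

Definition unit_vector {N : nat} (x : 'cV[C]_N) : Prop := inner x x = 1.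

Definition psd {N : nat} (A : 'M[C]_N) : Prop :=
  forall x : 'cV[C]_N, 0 <= inner (A *m x) x.

Definition is_linear {p q : nat} {V : lmodType C} (f : 'M[C]_(p, q) -> V) : Prop :=
  forall (c : C) (A B : 'M[C]_(p, q)), f (c *: A + B) = c *: f A + f B.

Definition is_state {N : nat} (rho : 'M[C]_N -> C) : Prop :=
  [/\ forall (c : C) A B, rho (c *: A + B) = c * rho A + rho B,
      forall A, psd A -> 0 <= rho A
    & rho 1%:M = 1].

(* phi (x) id_{M_k} : M_m (x) M_k -> M_n (x) M_k, tensors realised as
   Kronecker products (mxtens: A *t B) on C^(m*k) *)
Definition tens_id {m n : nat} (k : nat) (phi : 'M[C]_m -> 'M[C]_n)
    (X : 'M[C]_(m * k)) : 'M[C]_(n * k) :=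
  \sum_(i < m) \sum_(j < m) \sum_(k1 < k) \sum_(l < k)
     X (mxtens_index (i, k1)) (mxtens_index (j, l)) *:
       (phi (delta_mx i j) *t (delta_mx k1 l : 'M[C]_k)).

Definition completely_positive {m n : nat} (phi : 'M[C]_m -> 'M[C]_n) : Prop :=
  forall (k : nat) (X : 'M[C]_(m * k)), psd X -> psd (tens_id phi X).

Definition UCP {m n : nat} (phi : 'M[C]_m -> 'M[C]_n) : Prop :=
  [/\ is_linear phi, phi 1%:M = 1%:M & completely_positive phi].

Definition separable {m n : nat} (rho : 'M[C]_(m * n) -> C) : Prop :=
  exists (r : nat) (p : 'I_r -> C) (sigma : 'I_r -> 'M[C]_m -> C)
         (tau : 'I_r -> 'M[C]_n -> C),
    [/\ forall j, 0 <= p j,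
        \sum_(j < r) p j = 1,
        forall j, is_state (sigma j) /\ is_state (tau j)
      & forall (a : 'M[C]_m) (b : 'M[C]_n),
          rho (a *t b) = \sum_(j < r) p j * sigma j a * tau j b].

Definition entangled {m n : nat} (rho : 'M[C]_(m * n) -> C) : Prop :=
  is_state rho /\ ~ separable rho.

Definition marginally_cyclic {n : nat} (xi : 'cV[C]_(n * n)) : Prop :=
  forall eta : 'cV[C]_(n * n),
    exists a : 'M[C]_n, (a *t (1%:M : 'M[C]_n)) *m xi = eta.

Definition vstate {N : nat} (xi : 'cV[C]_N) (Y : 'M[C]_N) : C := inner (Y *m xi) xi.

(* the state a (x) b |-> <(phi a (x) b) xi, xi>, i.e. omega_xi o (phi (x) id) *)
Definition phi_state {m n : nat} (phi : 'M[C]_m -> 'M[C]_n) (xi : 'cV[C]_(n * n))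
    : 'M[C]_(m * n) -> C :=
  fun X => vstate xi (tens_id phi X).

Definition S_phi {m n : nat} (phi : 'M[C]_m -> 'M[C]_n)
    (rho : 'M[C]_(m * n) -> C) : Prop :=
  exists xi : 'cV[C]_(n * n),
    [/\ unit_vector xi, marginally_cyclic xi & rho = phi_state phi xi].

Definition preserves_entanglement {m n : nat} (phi : 'M[C]_m -> 'M[C]_n) : Prop :=
  forall xi : 'cV[C]_(n * n), unit_vector xi -> marginally_cyclic xi ->
    entangled (phi_state phi xi).

Definition entanglement_breaking {m n : nat} (phi : 'M[C]_m -> 'M[C]_n) : Prop :=
  forall rho : 'M[C]_(n * n) -> C, is_state rho ->
    separable (fun X : 'M[C]_(m * n) => rho (tens_id phi X)).

End Defs.

(* Main.v *)
Require Import Defs.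
From mathcomp Require Import all_boot all_order all_algebra.
From mathcomp Require Import reals spectral sesquilinear ring.
From Stdlib Require Import Classical.
From mathcomp.real_closed Require Import complex mxtens.
Set Implicit Arguments. Unset Strict Implicit. Unset Printing Implicit Defensive.
Import Order.TTheory GRing.Theory Num.Theory.
Local Open Scope ring_scope.

Section Aux.
Variable R : realType.
Local Notation C := R[i].

Lemma adjE p q (A : 'M[C]_(p,q)) i j : adj A i j = (A j i)^*.
Proof. by rewrite /adj !mxE. Qed.

Lemma adj_mul p q r (A : 'M[C]_(p,q)) (B : 'M_(q,r)) :
  adj (A *m B) = adj B *m adj A.
Proof. by rewrite /adj map_mxM trmx_mul. Qed.

Lemma adjK p q (A : 'M[C]_(p,q)) : adj (adj A) = A.
Proof. by apply/matrixP=> i j; rewrite !adjE conjCK. Qed.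

Lemma adj1 p : adj (1%:M : 'M[C]_p) = 1%:M.
Proof. by rewrite /adj map_mx1 trmx1. Qed.

Lemma innerE N (x y : 'cV[C]_N) : inner x y = \sum_i x i 0 * (y i 0)^*.
Proof. by rewrite /inner mxE; apply: eq_bigr => i _; rewrite adjE mulrC. Qed.

Lemma inner_conj N (x y : 'cV[C]_N) : (inner x y)^* = inner y x.
Proof.
rewrite !innerE rmorph_sum; apply: eq_bigr => i _.
by rewrite rmorphM /= conjCK mulrC.
Qed.

Lemma inner_adj p q (M : 'M[C]_(p,q)) x y :
  inner (M *m x) y = inner x (adj M *m y).
Proof. by rewrite /inner adj_mul adjK mulmxA. Qed.

Lemma innerDZl N (c : C) (x y z : 'cV[C]_N) :
  inner (c *: x + y) z = c * inner x z + inner y z.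
Proof. by rewrite /inner mulmxDr -scalemxAr !mxE. Qed.

Lemma innerDl N (x y z : 'cV[C]_N) : inner (x + y) z = inner x z + inner y z.
Proof. by rewrite -[x]scale1r innerDZl mul1r scale1r. Qed.

Lemma innerZl N c (x z : 'cV[C]_N) : inner (c *: x) z = c * inner x z.
Proof.
rewrite -[c *: x]addr0 innerDZl.
have -> : inner 0 z = 0 by rewrite innerE big1 // => i _; rewrite mxE mul0r.
by rewrite addr0.
Qed.

Lemma innerDr N (x y z : 'cV[C]_N) : inner z (x + y) = inner z x + inner z y.
Proof. by rewrite -inner_conj innerDl rmorphD /= !inner_conj. Qed.

Lemma innerZr N c (x z : 'cV[C]_N) : inner z (c *: x) = c^* * inner z x.
Proof. by rewrite -inner_conj innerZl rmorphM /= !inner_conj. Qed.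

Lemma lin0 p q (V : lmodType C) (f : 'M[C]_(p,q) -> V) : is_linear f -> f 0 = 0.
Proof.
move=> h; have := h 1 0 0; rewrite scale1r addr0 scale1r => E.
by apply: (@addrI _ (f 0)); rewrite addr0; exact/esym.
Qed.

Lemma linD p q (V : lmodType C) (f : 'M[C]_(p,q) -> V) : is_linear f ->
  forall A B, f (A + B) = f A + f B.
Proof. by move=> h A B; rewrite -[A]scale1r h !scale1r. Qed.

Lemma linZ p q (V : lmodType C) (f : 'M[C]_(p,q) -> V) : is_linear f ->
  forall c A, f (c *: A) = c *: f A.
Proof. by move=> h c A; rewrite -[c *: A]addr0 h (lin0 h) addr0. Qed.

Lemma lin_sum p q (V : lmodType C) (f : 'M[C]_(p,q) -> V) : is_linear f ->
  forall (I : Type) (r : seq I) (P : pred I) F,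
  f (\sum_(i <- r | P i) F i) = \sum_(i <- r | P i) f (F i).
Proof. by move=> h I r P F; apply: (big_morph f (linD h) (lin0 h)). Qed.

Lemma state_lin N (rho : 'M[C]_N -> C) : is_state rho -> is_linear (V := C^o) rho.
Proof. by case=> h _ _ c A B; rewrite h. Qed.

Lemma sum_tens (V : nmodType) m n (F : 'I_(m*n) -> V) :
  \sum_(I < m*n) F I = \sum_(i < m) \sum_(k < n) F (mxtens_index (i,k)).
Proof.
rewrite pair_big /= (reindex (@mxtens_index m n)) /=; last first.
  by apply: onW_bij; exists (@mxtens_unindex m n); [exact: (@mxtens_indexK m n)| exact: (@mxtens_unindexK m n)].
by apply: eq_bigr => -[i k].
Qed.


Lemma sum_delta n (k : 'I_n) (F : 'I_n -> C) :
  \sum_(k' < n) (k' == k)%:R * F k' = F k.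
Proof.
rewrite (bigD1 k) //= eqxx mul1r big1 ?addr0 // => j /negbTE ->.
by rewrite mul0r.
Qed.

Lemma tensDl m n p q (A B : 'M[C]_(m,n)) (M : 'M[C]_(p,q)) :
  (A + B) *t M = A *t M + B *t M.
Proof. by apply/matrixP=> i j; rewrite !mxE mulrDl. Qed.
Lemma tensDr m n p q (A B : 'M[C]_(m,n)) (M : 'M[C]_(p,q)) :
  M *t (A + B) = M *t A + M *t B.
Proof. by apply/matrixP=> i j; rewrite !mxE mulrDr. Qed.
Lemma tensZl m n p q c (A : 'M[C]_(m,n)) (M : 'M[C]_(p,q)) :
  (c *: A) *t M = c *: (A *t M).
Proof. by apply/matrixP=> i j; rewrite !mxE mulrA. Qed.
Lemma tensZr m n p q c (A : 'M[C]_(m,n)) (M : 'M[C]_(p,q)) :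
  M *t (c *: A) = c *: (M *t A).
Proof. by apply/matrixP=> i j; rewrite !mxE mulrCA. Qed.
Lemma tens_suml m n p q (M : 'M[C]_(p,q)) (I : Type) (r : seq I) (P : pred I)
  (F : I -> 'M[C]_(m,n)) :
  (\sum_(i <- r | P i) F i) *t M = \sum_(i <- r | P i) (F i *t M).
Proof. by apply: (big_morph (fun A => A *t M) (fun A B => tensDl A B M) (tens0mx M)). Qed.
Lemma tens_sumr m n p q (M : 'M[C]_(p,q)) (I : Type) (r : seq I) (P : pred I)
  (F : I -> 'M[C]_(m,n)) :
  M *t (\sum_(i <- r | P i) F i) = \sum_(i <- r | P i) (M *t F i).
Proof. by apply: (big_morph (fun A => M *t A) (fun A B => tensDr A B M) (tensmx0 M)). Qed.

Lemma tens11 m n : (1%:M : 'M[C]_m) *t (1%:M : 'M[C]_n) = 1%:M.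
Proof.
apply/matrixP=> I J; case: (mxtens_indexP I) => i k; case: (mxtens_indexP J) => j l.
rewrite tensmxE !mxE (inj_eq (can_inj (@mxtens_indexK m n))) xpair_eqE.
by rewrite -natrM mulnb.
Qed.

Lemma tens_id_tens m n (phi : 'M[C]_m -> 'M[C]_n) : is_linear phi ->
  forall (a : 'M[C]_m) (b : 'M[C]_n), tens_id phi (a *t b) = phi a *t b.
Proof.
move=> hphi a b.
rewrite [in RHS](matrix_sum_delta a) [in RHS](matrix_sum_delta b).
rewrite (lin_sum hphi) tens_suml /tens_id; apply: eq_bigr => i _.
rewrite (lin_sum hphi) tens_suml; apply: eq_bigr => j _.
rewrite (linZ hphi) tensZl tens_sumr scaler_sumr; apply: eq_bigr => k _.
rewrite tens_sumr scaler_sumr; apply: eq_bigr => l _.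
by rewrite tensZr tensmxE scalerA.
Qed.

Lemma tens_id_lin m n (phi : 'M[C]_m -> 'M[C]_n) (k : nat) c (X Y : 'M[C]_(m * k)) :
  tens_id phi (c *: X + Y) = c *: tens_id phi X + tens_id phi Y.
Proof.
rewrite /tens_id scaler_sumr -big_split; apply: eq_bigr => i _.
rewrite scaler_sumr -big_split; apply: eq_bigr => j _.
rewrite scaler_sumr -big_split; apply: eq_bigr => k1 _.
rewrite scaler_sumr -big_split; apply: eq_bigr => l _.
by rewrite !mxE scalerDl scalerA.
Qed.

Lemma tens_id1 m n (phi : 'M[C]_m -> 'M[C]_n) : is_linear phi -> phi 1%:M = 1%:M ->
  tens_id phi (1%:M : 'M_(m * n)) = 1%:M.
Proof. by move=> hl h1; rewrite -tens11 tens_id_tens // h1 tens11. Qed.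

Definition vec_of n (Y : 'M[C]_n) : 'cV[C]_(n * n) :=
  \col_I Y (mxtens_unindex I).1 (mxtens_unindex I).2.
Definition mat_of n (v : 'cV[C]_(n * n)) : 'M[C]_n :=
  \matrix_(i, k) v (mxtens_index (i, k)) 0.

Lemma vec_ofE n (Y : 'M[C]_n) i k : vec_of Y (mxtens_index (i, k)) 0 = Y i k.
Proof. by rewrite mxE mxtens_indexK. Qed.

Lemma vec_ofK n (Y : 'M[C]_n) : mat_of (vec_of Y) = Y.
Proof. by apply/matrixP=> i k; rewrite mxE vec_ofE. Qed.

Lemma mat_ofK n (v : 'cV[C]_(n * n)) : vec_of (mat_of v) = v.
Proof.
apply/matrixP=> I z; rewrite [z]ord1; case: (mxtens_indexP I) => i k.
by rewrite vec_ofE mxE.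
Qed.

Lemma tens1_vec n (a Y : 'M[C]_n) : (a *t 1%:M) *m vec_of Y = vec_of (a *m Y).
Proof.
apply/matrixP=> I z; rewrite [z]ord1; case: (mxtens_indexP I) => i k.
rewrite vec_ofE !mxE sum_tens; apply: eq_bigr => j _.
under eq_bigr => l _ do rewrite tensmxE vec_ofE mxE.
rewrite (bigD1 k) //= eqxx mulr1 big1 ?addr0 // => l.
by rewrite eq_sym => /negbTE ->; rewrite mulr0 mul0r.
Qed.

Lemma vstate_tens n (xi : 'cV[C]_(n * n)) (M : 'M[C]_n) k l :
  vstate xi (M *t delta_mx k l) = (adj (mat_of xi) *m M *m mat_of xi) k l.
Proof.
have E1 : forall i k', ((M *t delta_mx k l) *m xi) (mxtens_index (i,k')) 0 =
    (k' == k)%:R * \sum_j M i j * xi (mxtens_index (j,l)) 0.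
  move=> i k'; rewrite mxE sum_tens mulr_sumr; apply: eq_bigr => j _.
  rewrite (bigD1 l) //= big1 ?addr0.
    by rewrite tensmxE mxE !eqxx andbT; ring.
  by move=> l' /negbTE nl; rewrite tensmxE mxE nl andbF mulr0 mul0r.
rewrite /vstate innerE sum_tens.
under eq_bigr => i _ do under eq_bigr => k' _ do rewrite E1 -mulrA.
under eq_bigr => i _ do rewrite sum_delta.
rewrite mxE; under [RHS]eq_bigr => j _ do rewrite mxE mulr_suml.
rewrite exchange_big /=; apply: eq_bigr => i _.
rewrite mulr_suml; apply: eq_bigr => j _.
by rewrite adjE !mxE; ring.
Qed.


Lemma adjD p q (A B : 'M[C]_(p,q)) : adj (A + B) = adj A + adj B.
Proof. by apply/matrixP=> i j; rewrite !(adjE, mxE) rmorphD. Qed.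
Lemma adjZ p q c (A : 'M[C]_(p,q)) : adj (c *: A) = c^* *: adj A.
Proof. by apply/matrixP=> i j; rewrite !(adjE, mxE) rmorphM. Qed.
Lemma adj_delta p q (i : 'I_p) (j : 'I_q) : adj (delta_mx i j : 'M[C]_(p,q)) = delta_mx j i.
Proof. by apply/matrixP=> k l; rewrite adjE !mxE rmorph_nat andbC. Qed.
Lemma adj_tens m n p q (A : 'M[C]_(m,n)) (B : 'M[C]_(p,q)) : adj (A *t B) = adj A *t adj B.
Proof.
apply/matrixP=> I J; case: (mxtens_indexP I) => i k; case: (mxtens_indexP J) => j l.
by rewrite adjE !tensmxE !adjE rmorphM.
Qed.
Lemma adj_tstar p q (A : 'M[C]_(p,q)) : adj A = map_mx Num.conj (A^T).
Proof. by rewrite /adj map_trmx. Qed.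

Lemma inner_delta n (A : 'M[C]_n) i j : inner (A *m delta_mx j 0) (delta_mx i 0) = A i j.
Proof.
rewrite innerE -colE.
under eq_bigr => k _ do rewrite !mxE rmorph_nat andbT mulrC.
by rewrite sum_delta.
Qed.

Lemma psd_conj p q (M : 'M[C]_(p,q)) (Y : 'M[C]_p) : psd Y -> psd (adj M *m Y *m M).
Proof. by move=> hY x; rewrite -!mulmxA inner_adj adjK; apply: hY. Qed.

Lemma psd_rank1 n (y : 'cV[C]_n) : psd (y *m adj y).
Proof.
move=> x; rewrite -mulmxA innerE.
under eq_bigr => i _ do rewrite mxE big_ord1 -mulrA mulrCA.
rewrite -mulr_sumr.
have -> : (adj y *m x) 0 0 = inner x y by [].
have -> : \sum_i y i 0 * (x i 0)^* = inner y x by rewrite innerE.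
by rewrite -inner_conj mulrC; apply: mul_conjC_ge0.
Qed.

Lemma psd_1tens m n (A : 'M[C]_n) : psd A -> psd ((1%:M : 'M[C]_m) *t A).
Proof.
move=> hA v.
pose w (i : 'I_m) : 'cV[C]_n := \col_k v (mxtens_index (i, k)) 0.
suff -> : inner ((1%:M *t A) *m v) v = \sum_i inner (A *m w i) (w i).
  by apply: sumr_ge0 => i _; apply: hA.
rewrite innerE sum_tens; apply: eq_bigr => i _.
rewrite innerE; apply: eq_bigr => k _.
rewrite /w !mxE sum_tens (bigD1 i) //= [X in _ + X]big1 ?addr0; last first.
  move=> j nji; apply: big1 => l _.
  by rewrite tensmxE mxE eq_sym (negbTE nji) mul0r mul0r.
congr (_ * _); apply: eq_bigr => l _; by rewrite tensmxE !mxE eqxx mul1r.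
Qed.

Lemma solve_herm (z w zc wc : C) :
  zc + wc = z + w -> 'i * zc - 'i * wc = - 'i * z + 'i * w -> zc = w.
Proof.
move=> h1 h2.
have e : forall t : C, t = - 'i * ('i * t).
  by move=> t; rewrite mulrA mulNr -expr2 sqrCi opprK mul1r.
have h3 : zc - wc = w - z.
  rewrite [LHS]e -[X in - 'i * X](_ : 'i * zc - 'i * wc = 'i * (zc - wc)); last by ring.
  rewrite h2 [RHS]e; congr (_ * _); ring.
have h4 : zc * 2 = w * 2.
  have -> : zc * 2 = (zc + wc) + (zc - wc) by ring.
  by rewrite h1 h3; ring.
apply: (mulIf _ h4); by rewrite pnatr_eq0.
Qed.

Lemma psd_herm n (A : 'M[C]_n) : psd A -> adj A = A.
Proof.
move=> hA.
have hq : forall x, (inner (A *m x) x)^* = inner (A *m x) x.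
  by move=> x; apply: conj_Creal; apply: ger0_real; apply: hA.
have key : forall u v, (inner (A *m u) v)^* = inner (A *m v) u.
  move=> u v.
  have ex : forall c, inner (A *m (u + c *: v)) (u + c *: v) =
     inner (A *m u) u + c^* * inner (A *m u) v + c * inner (A *m v) u
       + c * c^* * inner (A *m v) v.
    move=> c; rewrite mulmxDr -scalemxAr innerDl !innerDr !innerZl !innerZr; ring.
  have r1 := hq (u + 1 *: v); have r2 := hq (u + 'i *: v).
  rewrite ex in r1; rewrite ex in r2.
  move: r1 r2; rewrite !rmorphD !rmorphM /= !conjCK conjCi conjC1 hq.
  have hv := hq v.
  rewrite hv.
  set z := inner (A *m u) v; set w := inner (A *m v) u; set a := inner (A *m u) u;
  set b := inner (A *m v) v.
  move=> /eqP; rewrite -subr_eq0 => /eqP r1.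
  move=> /eqP; rewrite -subr_eq0 => /eqP r2.
  apply: (@solve_herm z w z^* w^*).
    by apply/eqP; rewrite -subr_eq0; apply/eqP; rewrite -r1; ring.
  by apply/eqP; rewrite -subr_eq0; apply/eqP; rewrite -r2; ring.
apply/matrixP=> i j; rewrite adjE -inner_delta key inner_delta //.
Qed.

Lemma psd_sqrt n (A : 'M[C]_n) : psd A -> exists B : 'M[C]_n, A = adj B *m B.
Proof.
move=> hA; have hH := psd_herm hA.
have nA : A \is normalmx by apply/normalmxP; rewrite -adj_tstar hH.
have /orthomx_spectralP Aeq := nA.
have Pu := spectral_unitarymx A.
set P := spectralmx A in Aeq Pu; set d := spectral_diag A in Aeq.
have PP : P *m adj P = 1%:M by rewrite adj_tstar; apply/unitarymxP.
have iP : invmx P = adj P by rewrite adj_tstar invmx_unitary.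
rewrite iP in Aeq.
have dge : forall i, 0 <= d 0 i.
  move=> i; have := hA (adj P *m delta_mx i 0).
  rewrite [in X in X -> _]Aeq.
  have -> : (adj P *m diag_mx d *m P) *m (adj P *m (delta_mx i 0 : 'cV[C]_n)) =
      adj P *m (diag_mx d *m delta_mx i 0).
    by rewrite !mulmxA -(mulmxA _ P) PP mulmx1.
  by rewrite inner_adj adjK mulmxA PP mul1mx inner_delta mxE eqxx mulr1n.
pose s := \row_i sqrtC (d 0 i).
exists (diag_mx s *m P).
rewrite adj_mul.
have -> : adj (diag_mx s) = diag_mx s.
  apply/matrixP => i j; rewrite adjE !mxE.
  have [->|nij] := eqVneq i j.
    by rewrite ?eqxx ?mulr1n; apply: conj_Creal; apply: sqrtC_real.
  by rewrite !mulr0n rmorph0.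
rewrite [in LHS]Aeq !mulmxA -(mulmxA (adj P)) mulmx_diag.
congr (_ *m diag_mx _ *m _); apply/rowP => j; rewrite !mxE -expr2 sqrtCK //.
Qed.

Lemma psd_tens m n (G : 'M[C]_m) (A : 'M[C]_n) : psd G -> psd A -> psd (G *t A).
Proof.
move=> hG hA; have [B ->] := psd_sqrt hG.
have -> : (adj B *m B) *t A = adj (B *t 1%:M) *m (1%:M *t A) *m (B *t 1%:M).
  by rewrite adj_tens adj1 !tensmx_mul !mulmx1 !mul1mx.
by apply: psd_conj; apply: psd_1tens.
Qed.

Lemma posfun_zero n (f : 'M[C]_n -> C) : is_linear (V := C^o) f ->
  (forall A, psd A -> 0 <= f A) -> f 1%:M = 0 -> forall A, f A = 0.
Proof.
move=> hl hp h1.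
have r1 : forall y : 'cV[C]_n, 0 <= f (y *m adj y) by move=> y; apply/hp/psd_rank1.
have ekk : forall k, (delta_mx k 0 : 'cV[C]_n) *m adj (delta_mx k 0 : 'cV[C]_n) = delta_mx k k.
  by move=> k; rewrite adj_delta mul_delta_mx.
have dz : forall k, f (delta_mx k k) = 0.
  have := h1; rewrite mx1_sum_delta (lin_sum hl) => hs.
  move=> k; apply: (psumr_eq0P _ hs) => // i _; rewrite -ekk; exact: r1.
have off : forall k l (c : C), 0 <= c^* * f (delta_mx k l) + c * f (delta_mx l k).
  move=> k l c; have := r1 (delta_mx k 0 + c *: delta_mx l 0).
  rewrite adjD adjZ !adj_delta mulmxDl !mulmxDr -!scalemxAl -!scalemxAr !mul_delta_mx.
  rewrite !(linD hl) !(linZ hl) !dz !scaler0 add0r addr0.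
  by move=> h; exact: h.
have offz : forall k l, f (delta_mx k l) = 0.
  move=> k l; set a := f (delta_mx k l); set b := f (delta_mx l k).
  have p1 : 0 <= a + b by move: (off k l 1); rewrite (conjC1 R[i]) !mul1r.
  have p2 : 0 <= - (a + b).
    move: (off k l (-1)); rewrite rmorphN /= (conjC1 R[i]).
    by have -> : -1 * a + -1 * b = - (a + b) by ring.
  have p3 : 0 <= 'i * (b - a).
    move: (off k l 'i); rewrite (conjCi R[i]).
    by have -> : - 'i * a + 'i * b = 'i * (b - a) by ring.
  have p4 : 0 <= - ('i * (b - a)).
    move: (off k l (- 'i)); rewrite rmorphN /= (conjCi R[i]) opprK.
    by have -> : 'i * a + - 'i * b = - ('i * (b - a)) by ring.
  have e1 : a + b = 0 by apply/eqP; rewrite eq_le -oppr_ge0 p1 p2.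
  have e2 : 'i * (b - a) = 0 by apply/eqP; rewrite eq_le -oppr_ge0 p3 p4.
  move/eqP: e2; rewrite mulf_eq0 (negbTE (neq0Ci _)) /= subr_eq0 => /eqP eba.
  rewrite eba in e1.
  have : a * 2 = 0 * 2 by rewrite mul0r -e1; ring.
  by move/(mulIf _); apply; rewrite pnatr_eq0.
move=> A; rewrite (matrix_sum_delta A) (lin_sum hl) big1 // => k _.
rewrite (lin_sum hl) big1 // => l _.
by rewrite (linZ hl) offz scaler0.
Qed.

Lemma state_mat_psd n (tau : 'M[C]_n -> C) : is_state tau ->
  psd (\matrix_(k, l) tau (delta_mx k l)).
Proof.
move=> hs x; have hl := state_lin hs; case: hs => _ hp _.
set y := map_mx Num.conj x.
have := hp _ (psd_rank1 y).
suff -> : tau (y *m adj y) = inner ((\matrix_(k, l) tau (delta_mx k l)) *m x) x by [].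
rewrite {1}(matrix_sum_delta (y *m adj y)) (lin_sum hl) innerE; apply: eq_bigr => k _.
rewrite (lin_sum hl) mxE mulr_suml; apply: eq_bigr => l _.
rewrite (linZ hl) !mxE big_ord1 adjE !mxE conjCK.
rewrite mulrC -mulrA; exact: mulrC.
Qed.


Lemma psd1 n : psd (1%:M : 'M[C]_n).
Proof.
by move=> x; rewrite mul1mx innerE; apply: sumr_ge0 => i _; apply: mul_conjC_ge0.
Qed.

Lemma vstate_state N (xi : 'cV[C]_N) : unit_vector xi -> is_state (vstate xi).
Proof.
move=> hu; split.
- by move=> c A B; rewrite /vstate mulmxDl -scalemxAl innerDZl.
- by move=> A hA; apply: hA.
- by rewrite /vstate mul1mx.
Qed.

Lemma phi_state_state m n (phi : 'M[C]_m -> 'M[C]_n) xi :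
  UCP phi -> unit_vector xi -> is_state (phi_state phi xi).
Proof.
case=> hl h1 hcp hu; split.
- by move=> c A B; rewrite /phi_state /vstate tens_id_lin mulmxDl -scalemxAl innerDZl.
- by move=> A hA; apply: (hcp n A hA).
- by rewrite /phi_state /vstate tens_id1 // mul1mx.
Qed.

Lemma sep_EB m n (phi : 'M[C]_m -> 'M[C]_n) (xi : 'cV[C]_(n * n)) :
  UCP phi -> marginally_cyclic xi -> separable (phi_state phi xi) ->
  entanglement_breaking phi.
Proof.
case=> hl h1 hcp hmc [r [p [sig [tau [hp hs hst hform]]]]].
have [a0 ha0] := hmc (vec_of 1%:M).
have aX : a0 *m mat_of xi = 1%:M.
  by rewrite -[a0 *m mat_of xi]vec_ofK -tens1_vec mat_ofK ha0 vec_ofK.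
have Xa : mat_of xi *m a0 = 1%:M := mulmx1C aX.
pose G j : 'M[C]_n := \matrix_(k, l) tau j (delta_mx k l).
pose H j := adj a0 *m G j *m a0.
have hH : forall j, psd (H j).
  by move=> j; apply: psd_conj; apply: state_mat_psd; case: (hst j).
have hX : forall a, adj (mat_of xi) *m phi a *m mat_of xi =
    \sum_j (p j * sig j a) *: G j.
  move=> a; apply/matrixP => k l; rewrite -vstate_tens summxE.
  rewrite -(tens_id_tens hl).
  have := hform a (delta_mx k l); rewrite /phi_state => ->.
  by apply: eq_bigr => j _; rewrite !mxE.
have hphi : forall a, phi a = \sum_j (p j * sig j a) *: H j.
  move=> a; have -> : phi a = adj a0 *m (adj (mat_of xi) *m phi a *m mat_of xi) *m a0.
    by rewrite !mulmxA -adj_mul Xa adj1 mul1mx -mulmxA Xa mulmx1.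
  rewrite hX mulmx_sumr mulmx_suml; apply: eq_bigr => j _.
  by rewrite -scalemxAr -scalemxAl.
have hsum1 : \sum_j p j *: H j = 1%:M.
  have := hphi 1%:M; rewrite h1 => ->; apply: eq_bigr => j _.
  by case: (hst j) => [[_ _ ->] _]; rewrite mulr1.
move=> rho hrho; have hrl := state_lin hrho; case: hrho => hrlin hrpos hr1.
pose d j := rho (H j *t 1%:M).
have dge : forall j, 0 <= d j.
  move=> j; apply: hrpos. exact: psd_tens (hH j) (psd1 (n := n)).
exists r, (fun j => p j * d j), sig,
  (fun j => if d j == 0 then tau j else (fun b => rho (H j *t b) / d j)).
split.
- by move=> j; apply: mulr_ge0 (hp j) (dge j).
- transitivity (rho 1%:M); last exact: hr1.
  rewrite -tens11 -{1}hsum1 tens_suml (lin_sum hrl); apply: eq_bigr => j _.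
  by rewrite tensZl (linZ hrl).
- move=> j; split; first by case: (hst j).
  case: eqP => dz; first by case: (hst j).
  split.
  + move=> c A B /=; rewrite tensDr tensZr (linD hrl) (linZ hrl) /=.
    by rewrite mulrDl mulrA.
  + move=> A hA /=; apply: divr_ge0; [apply: hrpos; apply: psd_tens | apply: dge] => //.
  + by rewrite /= divff //; apply/eqP.
- move=> a b; rewrite /= (tens_id_tens hl) hphi tens_suml (lin_sum hrl).
  apply: eq_bigr => j _; rewrite tensZl (linZ hrl).
  case: eqP => dz.
  + have fz : forall B, rho (H j *t B) = 0.
      apply: posfun_zero => //.
      * by move=> c A B; rewrite tensDr tensZr (linD hrl) (linZ hrl).
      * by move=> A hA; apply: hrpos; apply: psd_tens.
    by rewrite fz dz scaler0 mulr0 !mul0r.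
  + transitivity (p j * sig j a * rho (H j *t b)); first by []. 
    by field; apply/eqP.
Qed.

Lemma omega_exists n : (0 < n)%N ->
  exists xi : 'cV[C]_(n * n), unit_vector xi /\ marginally_cyclic xi.
Proof.
move=> n0; set s : C := sqrtC n%:R.
have s0 : s != 0 by rewrite sqrtC_eq0 pnatr_eq0 -lt0n.
have sr : s^* = s by apply: conj_Creal; apply: sqrtC_real; apply: ler0n.
exists (vec_of (s^-1 *: 1%:M)); split.
- rewrite /unit_vector innerE sum_tens.
  transitivity (\sum_(i < n) (s^-1 * s^-1)).
    apply: eq_bigr => i _; rewrite (bigD1 i) //= big1 ?addr0.
      by rewrite vec_ofE !mxE eqxx mulr1 fmorphV /= sr.
    by move=> k nki; rewrite vec_ofE !mxE eq_sym (negbTE nki) mulr0 mul0r.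
  rewrite sumr_const card_ord -mulr_natr.
  have -> : (n%:R : C) = s ^+ 2 by rewrite sqrtCK.
  by field.
- move=> eta; exists (s *: mat_of eta).
  by rewrite tens1_vec -scalemxAr mulmx1 scalerA mulVf // scale1r mat_ofK.
Qed.

Lemma EB_n0 m (phi : 'M[C]_m -> 'M[C]_0) : entanglement_breaking phi.
Proof.
move=> rho hrho; exfalso.
have e : (1%:M : 'M[C]_(0 * 0)) = 0.
  by apply/matrixP => -[i hi] j; exfalso; move: hi; rewrite muln0 ltn0.
have z := lin0 (state_lin hrho).
case: hrho => _ _; rewrite e z => /eqP; rewrite eq_sym oner_eq0 //.
Qed.

End Aux.

Theorem corollary2p3 (R : realType) (m n : nat)
    (phi : 'M[R[i]]_m -> 'M[R[i]]_n) :
  UCP phi ->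
  ((exists rho, S_phi phi rho /\ entangled rho) ->
     (forall rho, S_phi phi rho -> entangled rho) /\ preserves_entanglement phi)
  /\
  (~ (exists rho, S_phi phi rho /\ entangled rho) -> entanglement_breaking phi).
Proof.
move=> hU.
have EBall : entanglement_breaking phi -> forall xi, unit_vector xi ->
    ~ entangled (phi_state phi xi).
  by move=> hEB xi hu [_ hns]; apply: hns; exact: (hEB (vstate xi) (vstate_state hu)).
split.
- move=> [rho0 [[xi0 [hu0 hmc0 ->]] hent]]; split.
  + move=> rho [xi [hu hmc ->]]; split; first exact: phi_state_state.
    by move=> hsep; exact: (EBall (sep_EB hU hmc hsep) xi0 hu0 hent).
  + move=> xi hu hmc; split; first exact: phi_state_state.
    by move=> hsep; exact: (EBall (sep_EB hU hmc hsep) xi0 hu0 hent).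
- move=> hno; case: n phi hU hno EBall => [|n'] phi hU hno _.
    exact: EB_n0.
  have [xi [hu hmc]] := @omega_exists R n'.+1 (ltn0Sn n').
  apply: (sep_EB hU hmc).
  case: (classic (separable (phi_state phi xi))) => // hns; exfalso; apply: hno.
  exists (phi_state phi xi); split; first by exists xi.
  by split; first exact: phi_state_state.
Qed.
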